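(* For $N\ge1$ let $U=-e^{2\pi i/N}\begin{pmatrix}1/2&-\sqrt{3}/2\\ \sqrt3/2&1/2\end{pmatrix}$, $|\psi_i\rangle=(U^i|0\rangle)^{\otimes N}$ ($i=0,1,2$), each with prior $1/3$, shared among $N$ parties each holding one qubit. Let $P^{opt}_N$ be the optimal minimum-error success probability and $P^{LOCC}_N$ the supremum of success probabilities achievable by $N$-party LOCC measurements. Then $\lim_{N\to\infty}P^{LOCC}_N=\lim_{N\to\infty}P^{opt}_N=1$; in particular $P^{opt}_N-P^{LOCC}_N\to0$.
   Context: The success probability of a three-outcome POVM $\{\Pi_i\}$ is $\tfrac13\sum_i\langle\psi_i|\Pi_i|\psi_i\rangle$. $N$-party LOCC means measurements implementable by local operations on each party's qubit together with classical communication among the parties. *)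

(* Defs.v *)
From Stdlib Require Import Reals Lra Lia List Arith.
Open Scope R_scope.

Definition C := (R * R)%type.
Definition Re (z : C) : R := fst z.
Definition Im (z : C) : R := snd z.
Definition RtoC (x : R) : C := (x, 0).
Definition C0 : C := (0, 0).
Definition C1 : C := (1, 0).
Definition Cadd (z w : C) : C := (fst z + fst w, snd z + snd w).
Definition Cmul (z w : C) : C :=
  (fst z * fst w - snd z * snd w, fst z * snd w + snd z * fst w).
Definition Copp (z : C) : C := (- fst z, - snd z).
Definition Cconj (z : C) : C := (fst z, - snd z).
Definition Cexpi (t : R) : C := (cos t, sin t).

Fixpoint Csum (f : nat -> C) (n : nat) : C :=
  match n with O => C0 | S m => Cadd (Csum f m) (f m) end.
Fixpoint Cprod (f : nat -> C) (n : nat) : C :=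
  match n with O => C1 | S m => Cmul (Cprod f m) (f m) end.

(* ---------- matrices and vectors (entries outside the range are ignored) ---------- *)
Definition Mat := nat -> nat -> C.
Definition Vec := nat -> C.

Definition Mzero : Mat := fun _ _ => C0.
Definition Mid : Mat := fun a b => if Nat.eqb a b then C1 else C0.
Definition Madd (A B : Mat) : Mat := fun a b => Cadd (A a b) (B a b).
Definition Mscale (z : C) (A : Mat) : Mat := fun a b => Cmul z (A a b).
Definition Mapply (d : nat) (A : Mat) (v : Vec) : Vec :=
  fun a => Csum (fun b => Cmul (A a b) (v b)) d.
Definition qform (d : nat) (A : Mat) (v : Vec) : C :=
  Csum (fun a => Csum (fun b => Cmul (Cconj (v a)) (Cmul (A a b) (v b))) d) d.
Definition Meq (d : nat) (A B : Mat) : Prop :=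
  forall a b, (a < d)%nat -> (b < d)%nat -> A a b = B a b.
(* positive semidefinite (hence Hermitian) operator on C^d *)
Definition psd (d : nat) (A : Mat) : Prop :=
  forall v : Vec, Im (qform d A v) = 0 /\ 0 <= Re (qform d A v).

(* ---------- N qubits: basis index a < 2^N, party k holds bit k of a ---------- *)
Definition bit (k a : nat) : nat := if Nat.testbit a k then 1%nat else 0%nat.

Definition kron (N : nat) (E : nat -> Mat) : Mat :=
  fun a b => Cprod (fun k => E k (bit k a) (bit k b)) N.
Definition vpow (N : nat) (phi : Vec) : Vec :=
  fun a => Cprod (fun k => phi (bit k a)) N.

Definition sqrt3 := sqrt 3.
Definition Urot : Mat := fun a b =>
  match a, b with
  | O, O => RtoC (1/2) | O, S _ => RtoC (- sqrt3 / 2)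
  | S _, O => RtoC (sqrt3 / 2) | S _, S _ => RtoC (1/2)
  end.
Definition Umat (N : nat) : Mat :=
  Mscale (Copp (Cexpi (2 * PI / INR N))) Urot.
Definition ket0 : Vec := fun a => if Nat.eqb a 0 then C1 else C0.
Fixpoint Upow_ket0 (N i : nat) : Vec :=
  match i with O => ket0 | S j => Mapply 2 (Umat N) (Upow_ket0 N j) end.
Definition psi (N i : nat) : Vec := vpow N (Upow_ket0 N i).

Definition povm3 (N : nat) (P : nat -> Mat) : Prop :=
  (forall i, (i < 3)%nat -> psd (2 ^ N) (P i)) /\
  Meq (2 ^ N) (Madd (P 0%nat) (Madd (P 1%nat) (P 2%nat))) Mid.

Definition success (N : nat) (P : nat -> Mat) : R :=
  / 3 * (Re (qform (2 ^ N) (P 0%nat) (psi N 0))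
       + Re (qform (2 ^ N) (P 1%nat) (psi N 1))
       + Re (qform (2 ^ N) (P 2%nat) (psi N 2))).

Definition upd (E : nat -> Mat) (j : nat) (F : Mat) : nat -> Mat :=
  fun k => if Nat.eqb k j then F else E k.
Definition Msum2 (l : list (Mat * (nat -> Mat))) : Mat :=
  fold_right (fun p acc => Madd (fst p) acc) Mzero l.
Definition Psum (l : list (Mat * (nat -> Mat))) : nat -> Mat :=
  fun i => fold_right (fun p acc => Madd (snd p i) acc) Mzero l.

(* LOCC protocol trees (Heisenberg picture).  A node carries the product
   operator E_0 (x) ... (x) E_{N-1} accumulated along its branch (E k is party
   k's local effect on its own qubit).  At a node either the protocol stops
   and announces an outcome i < 3, or some party j performs a local
   measurement, i.e. splits its local effect E j into finitely many positive
   summands F_m (sum F_m = E j), broadcasts m, and the protocol continues in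
   branch m.  [locc_tree N E P] says the subtree rooted at E realizes the
   (unnormalized) outcome operators P 0, P 1, P 2. *)
Inductive locc_tree (N : nat) : (nat -> Mat) -> (nat -> Mat) -> Prop :=
  | locc_leaf : forall E i, (i < 3)%nat ->
      locc_tree N E (fun i' => if Nat.eqb i' i then kron N E else Mzero)
  | locc_split : forall E j (l : list (Mat * (nat -> Mat))),
      (j < N)%nat ->
      (forall F Q, In (F, Q) l -> psd 2 F /\ locc_tree N (upd E j F) Q) ->
      Meq 2 (Msum2 l) (E j) ->
      locc_tree N E (Psum l).

Definition locc3 (N : nat) (P : nat -> Mat) : Prop :=
  locc_tree N (fun _ => Mid) P.

Definition opt_values (N : nat) (p : R) : Prop :=
  exists P, povm3 N P /\ p = success N P.
Definition locc_values (N : nat) (p : R) : Prop :=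
  exists P, locc3 N P /\ p = success N P.

(* Main.v *)
Require Import Defs.
From Stdlib Require Import Reals.
Open Scope R_scope.
From Stdlib Require Import Lra Lia List Arith.
Require Import Defs.


Lemma Cpair_eq (a b c d : R) : a = c -> b = d -> (a, b) = (c, d).
Proof. intros; subst; reflexivity. Qed.

Definition Csub (z w : C) : C := Cadd z (Copp w).

Lemma Cring_theory : ring_theory C0 C1 Cadd Cmul Csub Copp (@eq C).
Proof.
  constructor; intros; repeat match goal with z : C |- _ => destruct z end;
  unfold Csub, Cadd, Cmul, Copp, C0, C1; simpl; apply Cpair_eq; ring.
Qed.
Add Ring Cring : Cring_theory.

Lemma Csum_add f g n : Csum (fun a => Cadd (f a) (g a)) n = Cadd (Csum f n) (Csum g n).
Proof. induction n; simpl. unfold C0, Cadd; simpl; apply Cpair_eq; ring. rewrite IHn; ring. Qed.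

Lemma Csum_mul_l z f n : Csum (fun a => Cmul z (f a)) n = Cmul z (Csum f n).
Proof. induction n; simpl. unfold C0, Cmul; simpl; apply Cpair_eq; ring. rewrite IHn; ring. Qed.

Lemma Csum_mul_r z f n : Csum (fun a => Cmul (f a) z) n = Cmul (Csum f n) z.
Proof. induction n; simpl. unfold C0, Cmul; simpl; apply Cpair_eq; ring. rewrite IHn; ring. Qed.

Lemma Csum_ext f g n : (forall a, (a < n)%nat -> f a = g a) -> Csum f n = Csum g n.
Proof. induction n; intros H; simpl; auto. rewrite IHn by (intros; apply H; lia). rewrite H by lia. auto. Qed.

Lemma Csum_zero n : Csum (fun _ => C0) n = C0.
Proof. induction n; simpl; auto. rewrite IHn. ring. Qed.

Lemma Csum_split f n m : Csum f (n + m) = Cadd (Csum f n) (Csum (fun a => f (n + a)%nat) m).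
Proof. induction m; simpl. rewrite Nat.add_0_r. ring. rewrite Nat.add_succ_r. simpl. rewrite IHm. ring. Qed.

Lemma Cconj_add z w : Cconj (Cadd z w) = Cadd (Cconj z) (Cconj w).
Proof. destruct z, w; unfold Cconj, Cadd; simpl; apply Cpair_eq; ring. Qed.
Lemma Cconj_mul z w : Cconj (Cmul z w) = Cmul (Cconj z) (Cconj w).
Proof. destruct z, w; unfold Cconj, Cmul; simpl; apply Cpair_eq; ring. Qed.

Lemma Csum_conj f n : Cconj (Csum f n) = Csum (fun a => Cconj (f a)) n.
Proof. induction n; simpl. unfold Cconj, C0; simpl; apply Cpair_eq; ring. rewrite Cconj_add, IHn; auto. Qed.

Lemma Cprod_mul f g n : Cprod (fun a => Cmul (f a) (g a)) n = Cmul (Cprod f n) (Cprod g n).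
Proof. induction n; simpl. unfold C1, Cmul; simpl; apply Cpair_eq; ring. rewrite IHn; ring. Qed.

Lemma Cprod_conj f n : Cconj (Cprod f n) = Cprod (fun a => Cconj (f a)) n.
Proof. induction n; simpl. unfold Cconj, C1; simpl; apply Cpair_eq; ring. rewrite Cconj_mul, IHn; auto. Qed.

Lemma Cprod_ext f g n : (forall a, (a < n)%nat -> f a = g a) -> Cprod f n = Cprod g n.
Proof. induction n; intros H; simpl; auto. rewrite IHn by (intros; apply H; lia). rewrite H by lia. auto. Qed.

Lemma Cprod_upd j x g n : (j < n)%nat ->
  Cprod (fun k => if Nat.eqb k j then x else g k) n
  = Cmul x (Cprod (fun k => if Nat.eqb k j then C1 else g k) n).
Proof.
  induction n; intros Hj; [lia|]. simpl.
  destruct (Nat.eq_dec j n).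
  - subst. rewrite Nat.eqb_refl.
    rewrite !(Cprod_ext (fun k => if Nat.eqb k n then _ else g k) g n)
      by (intros a Ha; destruct (Nat.eqb_spec a n); [lia|auto]).
    ring.
  - rewrite IHn by lia. destruct (Nat.eqb_spec n j); [lia|]. ring.
Qed.


Lemma qform_Madd d A B v : qform d (Madd A B) v = Cadd (qform d A v) (qform d B v).
Proof.
  unfold qform, Madd. rewrite <- Csum_add. apply Csum_ext; intros.
  rewrite <- Csum_add. apply Csum_ext; intros. ring.
Qed.

Lemma qform_Mzero d v : qform d Mzero v = C0.
Proof.
  unfold qform, Mzero.
  rewrite (Csum_ext _ (fun _ => C0)). apply Csum_zero.
  intros. rewrite (Csum_ext _ (fun _ => C0)). apply Csum_zero.
  intros. unfold C0, Cmul; simpl; apply Cpair_eq; ring.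
Qed.

Lemma qform_Meq d A B v : Meq d A B -> qform d A v = qform d B v.
Proof.
  intros H. unfold qform. apply Csum_ext; intros. apply Csum_ext; intros.
  rewrite H; auto.
Qed.

Lemma pow2_pos N : (0 < 2 ^ N)%nat.
Proof. apply Nat.neq_0_lt_0, Nat.pow_nonzero; lia. Qed.

Lemma testbit_low a N : (a < 2 ^ N)%nat -> Nat.testbit a N = false.
Proof.
  intros H. apply Nat.testbit_false. rewrite Nat.div_small by auto. reflexivity.
Qed.

Lemma testbit_high a N : (a < 2 ^ N)%nat -> Nat.testbit (2 ^ N + a) N = true.
Proof.
  intros H. apply Nat.testbit_true.
  replace (2 ^ N + a)%nat with (a + 1 * 2 ^ N)%nat by lia.
  rewrite Nat.div_add by (pose proof (pow2_pos N); lia).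
  rewrite Nat.div_small by auto. reflexivity.
Qed.

Lemma testbit_shift a N k : (a < 2 ^ N)%nat -> (k < N)%nat ->
  Nat.testbit (2 ^ N + a) k = Nat.testbit a k.
Proof.
  intros H Hk. rewrite <- (Nat.mod_pow2_bits_low (2^N + a) N k Hk).
  replace (2 ^ N + a)%nat with (a + 1 * 2 ^ N)%nat by lia.
  rewrite Nat.Div0.mod_add. rewrite Nat.mod_small by auto. reflexivity.
Qed.

Lemma pow2_S N : (2 ^ S N = 2 ^ N + 2 ^ N)%nat.
Proof. simpl. lia. Qed.

Lemma L1 (f : nat -> nat -> C) N :
  Csum (fun a => Cprod (fun k => f k (bit k a)) N) (2 ^ N)
  = Cprod (fun k => Cadd (f k 0%nat) (f k 1%nat)) N.
Proof.
  induction N.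
  - simpl. unfold C0, C1, Cadd; simpl; apply Cpair_eq; ring.
  - rewrite pow2_S, Csum_split. simpl.
    rewrite (Csum_ext (fun a => Cmul (Cprod (fun k => f k (bit k a)) N) (f N (bit N a)))
               (fun a => Cmul (Cprod (fun k => f k (bit k a)) N) (f N 0%nat))).
    2:{ intros a Ha. unfold bit at 2. rewrite testbit_low; auto. }
    rewrite (Csum_ext (fun a => Cmul (Cprod (fun k => f k (bit k (2 ^ N + a))) N) (f N (bit N (2 ^ N + a))))
               (fun a => Cmul (Cprod (fun k => f k (bit k a)) N) (f N 1%nat))).
    2:{ intros a Ha. unfold bit at 2. rewrite testbit_high; auto. f_equal.
        apply Cprod_ext; intros k Hk. unfold bit. rewrite testbit_shift; auto. }
    rewrite !Csum_mul_r, IHN. ring.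
Qed.

Lemma qform_kron N E phi :
  qform (2 ^ N) (kron N E) (vpow N phi) = Cprod (fun k => qform 2 (E k) phi) N.
Proof.
  set (h := fun k x y => Cmul (Cconj (phi x)) (Cmul (E k x y) (phi y))).
  unfold qform, kron, vpow.
  rewrite (Csum_ext _ (fun a => Cprod (fun k => Cadd (h k (bit k a) 0%nat) (h k (bit k a) 1%nat)) N)).
  - rewrite (L1 (fun k x => Cadd (h k x 0%nat) (h k x 1%nat))).
    apply Cprod_ext; intros. simpl. unfold h. ring.
  - intros a Ha.
    rewrite (Csum_ext _ (fun b => Cprod (fun k => h k (bit k a) (bit k b)) N)).
    + apply (L1 (fun k x => h k (bit k a) x)).
    + intros b Hb. unfold h. rewrite Cprod_conj, <- !Cprod_mul. reflexivity.
Qed.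


Lemma Cprod_zero f n k : (k < n)%nat -> f k = C0 -> Cprod f n = C0.
Proof.
  induction n; intros Hk Hf; [lia|]. simpl.
  destruct (Nat.eq_dec k n).
  - subst. rewrite Hf. ring.
  - rewrite IHn by (auto; lia). ring.
Qed.

Lemma Cprod_one f n : (forall k, (k < n)%nat -> f k = C1) -> Cprod f n = C1.
Proof. induction n; intros H; simpl; auto. rewrite IHn, H by (auto; lia). ring. Qed.

Lemma bits_dec a b N : (forall k, (k < N)%nat -> Nat.testbit a k = Nat.testbit b k)
  \/ exists k, (k < N)%nat /\ Nat.testbit a k <> Nat.testbit b k.
Proof.
  induction N.
  - left; intros; lia.
  - destruct IHN as [H|[k [Hk Hne]]].
    + destruct (Bool.bool_dec (Nat.testbit a N) (Nat.testbit b N)).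
      * left; intros k Hk. destruct (Nat.eq_dec k N); subst; auto. apply H; lia.
      * right; exists N; split; auto.
    + right; exists k; split; auto.
Qed.

Lemma testbit_big a N k : (a < 2 ^ N)%nat -> (N <= k)%nat -> Nat.testbit a k = false.
Proof.
  intros H Hk. apply testbit_low.
  apply Nat.lt_le_trans with (2 ^ N)%nat; auto. apply Nat.pow_le_mono_r; lia.
Qed.

Lemma kron_Mid N : Meq (2 ^ N) (kron N (fun _ => Mid)) Mid.
Proof.
  intros a b Ha Hb. unfold kron.
  destruct (bits_dec a b N) as [H|[k [Hk Hne]]].
  - assert (a = b).
    { apply Nat.bits_inj. intros k. destruct (Nat.lt_ge_cases k N).
      apply H; auto. rewrite !(testbit_big _ N k); auto. }
    subst. unfold Mid at 2. rewrite Nat.eqb_refl.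
    apply Cprod_one; intros. unfold Mid. rewrite Nat.eqb_refl. auto.
  - assert (a <> b) by (intro; subst; auto).
    unfold Mid at 2. destruct (Nat.eqb_spec a b); [contradiction|].
    apply (Cprod_zero _ _ k Hk). unfold Mid, bit.
    destruct (Nat.testbit a k), (Nat.testbit b k); simpl; auto; congruence.
Qed.

Definition cnn (z : C) : Prop := Im z = 0 /\ 0 <= Re z.

Lemma cnn_mul z w : cnn z -> cnn w -> cnn (Cmul z w).
Proof.
  destruct z, w; unfold cnn, Cmul, Re, Im; simpl; intros [H1 H2] [H3 H4].
  subst. split; [ring|]. nra.
Qed.

Lemma cnn_add z w : cnn z -> cnn w -> cnn (Cadd z w).
Proof. destruct z, w; unfold cnn, Cadd, Re, Im; simpl; intros; lra. Qed.

Lemma cnn_prod f n : (forall k, (k < n)%nat -> cnn (f k)) -> cnn (Cprod f n).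
Proof.
  induction n; intros H; simpl.
  - unfold cnn, C1, Re, Im; simpl; lra.
  - apply cnn_mul; [apply IHn; intros; apply H; lia | apply H; lia].
Qed.

Fixpoint Rprod (f : nat -> R) (n : nat) : R :=
  match n with O => 1 | S m => Rprod f m * f m end.

Lemma qform_rank1 d (G : nat -> R) M v :
  (forall a b, (a < d)%nat -> (b < d)%nat -> M a b = RtoC (G a * G b)) -> cnn (qform d M v).
Proof.
  intros HM.
  set (S := Csum (fun b => Cmul (RtoC (G b)) (v b)) d).
  assert (qform d M v = Cmul (Cconj S) S) as ->.
  { unfold qform, S. rewrite Csum_conj, <- Csum_mul_r. apply Csum_ext; intros a Ha.
    rewrite <- Csum_mul_l. apply Csum_ext; intros b Hb. rewrite HM by auto.
    destruct (v a), (v b). unfold RtoC, Cconj, Cmul; simpl. apply Cpair_eq; ring. }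
  destruct S. unfold cnn, Cconj, Cmul, Re, Im; simpl. split; [ring|nra].
Qed.

Lemma kron_rank1 N E (U : nat -> nat -> R) :
  (forall k, (k < N)%nat -> forall a b, E k a b = RtoC (U k a * U k b)) ->
  forall a b, kron N E a b =
    RtoC (Rprod (fun k => U k (bit k a)) N * Rprod (fun k => U k (bit k b)) N).
Proof.
  intros H a b. unfold kron. induction N; simpl.
  - unfold C1, RtoC. apply Cpair_eq; ring.
  - rewrite IHN by (intros; apply H; lia). rewrite H by lia.
    unfold RtoC, Cmul; simpl. apply Cpair_eq; ring.
Qed.

Lemma psd_kron_rank1 N E (U : nat -> nat -> R) :
  (forall k, (k < N)%nat -> forall a b, E k a b = RtoC (U k a * U k b)) ->
  psd (2 ^ N) (kron N E).
Proof.
  intros H v. apply (qform_rank1 _ (fun a => Rprod (fun k => U k (bit k a)) N)).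
  intros; apply kron_rank1; auto.
Qed.

Lemma psd_Madd d A B : psd d A -> psd d B -> psd d (Madd A B).
Proof. intros HA HB v. rewrite qform_Madd. apply cnn_add; [apply HA|apply HB]. Qed.

Lemma psd_Mzero d : psd d Mzero.
Proof. intros v. rewrite qform_Mzero. unfold C0, Re, Im; simpl; lra. Qed.


Definition Inv N E P phi : Prop :=
  (forall i, cnn (qform (2 ^ N) (P i) (vpow N phi))) /\
  Cadd (qform (2 ^ N) (P 0%nat) (vpow N phi))
       (Cadd (qform (2 ^ N) (P 1%nat) (vpow N phi)) (qform (2 ^ N) (P 2%nat) (vpow N phi)))
  = Cprod (fun k => qform 2 (E k) phi) N.

Lemma upd_prod N E j F phi : (j < N)%nat ->
  Cprod (fun k => qform 2 (upd E j F k) phi) N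
  = Cmul (qform 2 F phi) (Cprod (fun k => if Nat.eqb k j then C1 else qform 2 (E k) phi) N).
Proof.
  intros Hj. rewrite <- Cprod_upd by auto. apply Cprod_ext; intros k _.
  unfold upd. destruct (Nat.eqb k j); auto.
Qed.

Lemma E_prod N E j phi : (j < N)%nat ->
  Cprod (fun k => qform 2 (E k) phi) N
  = Cmul (qform 2 (E j) phi) (Cprod (fun k => if Nat.eqb k j then C1 else qform 2 (E k) phi) N).
Proof.
  intros Hj. rewrite <- Cprod_upd by auto. apply Cprod_ext; intros k _.
  destruct (Nat.eqb_spec k j); subst; auto.
Qed.

Lemma list_inv N E j phi (l : list (Mat * (nat -> Mat))) :
  (j < N)%nat ->
  (forall F Q, In (F, Q) l -> psd 2 F /\ Inv N (upd E j F) Q phi) ->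
  (forall i, cnn (qform (2 ^ N) (Psum l i) (vpow N phi))) /\
  Cadd (qform (2 ^ N) (Psum l 0%nat) (vpow N phi))
       (Cadd (qform (2 ^ N) (Psum l 1%nat) (vpow N phi)) (qform (2 ^ N) (Psum l 2%nat) (vpow N phi)))
  = Cmul (qform 2 (Msum2 l) phi) (Cprod (fun k => if Nat.eqb k j then C1 else qform 2 (E k) phi) N).
Proof.
  intros Hj. induction l as [|[F Q] l IH]; intros H.
  - unfold Psum, Msum2; simpl. rewrite !qform_Mzero. split.
    + intros; unfold cnn, C0, Re, Im; simpl; lra.
    + ring.
  - destruct IH as [IH1 IH2]. { intros F' Q' Hin. apply H; simpl; auto. }
    destruct (H F Q (or_introl eq_refl)) as [_ [H1 H2]].
    unfold Psum, Msum2 in *; simpl. split.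
    + intros i. rewrite qform_Madd. apply cnn_add; auto.
    + rewrite !qform_Madd. rewrite upd_prod in H2 by auto.
      transitivity (Cadd (Cadd (qform (2 ^ N) (Q 0%nat) (vpow N phi))
       (Cadd (qform (2 ^ N) (Q 1%nat) (vpow N phi)) (qform (2 ^ N) (Q 2%nat) (vpow N phi))))
        (Cadd (qform (2 ^ N) (fold_right (fun p acc => Madd (snd p 0%nat) acc) Mzero l) (vpow N phi))
       (Cadd (qform (2 ^ N) (fold_right (fun p acc => Madd (snd p 1%nat) acc) Mzero l) (vpow N phi))
             (qform (2 ^ N) (fold_right (fun p acc => Madd (snd p 2%nat) acc) Mzero l) (vpow N phi))))).
      * ring.
      * rewrite H2, IH2. ring.
Qed.

Fixpoint locc_inv N E P phi (H : locc_tree N E P) {struct H} :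
  (forall k, cnn (qform 2 (E k) phi)) -> Inv N E P phi.
Proof.
  destruct H as [E i Hi | E j l Hj Hl Hsum]; intros HE.
  - split.
    + intros i'. destruct (Nat.eqb i' i).
      * rewrite qform_kron. apply cnn_prod; auto.
      * rewrite qform_Mzero. unfold cnn, C0, Re, Im; simpl; lra.
    + rewrite <- qform_kron.
      destruct i as [|[|[|i]]]; simpl; rewrite ?qform_Mzero. all: try ring. all: lia.
  - assert (HL : forall F Q, In (F, Q) l -> psd 2 F /\ Inv N (upd E j F) Q phi).
    { intros F Q Hin. destruct (Hl F Q Hin) as [HF HT]. split; auto.
      apply (locc_inv N (upd E j F) Q phi HT).
      intros k. unfold upd. destruct (Nat.eqb k j); [apply HF|auto]. }
    destruct (list_inv N E j phi l Hj HL) as [H1 H2].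
    split; auto. rewrite H2, (E_prod N E j phi Hj). f_equal.
    apply qform_Meq; auto.
Qed.


Lemma qf2 M (f : nat -> nat -> R) phi z (r : nat -> R) :
  (forall x y, (x < 2)%nat -> (y < 2)%nat -> M x y = RtoC (f x y)) ->
  phi 0%nat = Cmul z (RtoC (r 0%nat)) -> phi 1%nat = Cmul z (RtoC (r 1%nat)) ->
  qform 2 M phi = RtoC ((fst z ^ 2 + snd z ^ 2) *
     (r 0%nat * f 0%nat 0%nat * r 0%nat + r 0%nat * f 0%nat 1%nat * r 1%nat
      + r 1%nat * f 1%nat 0%nat * r 0%nat + r 1%nat * f 1%nat 1%nat * r 1%nat)).
Proof.
  intros HM H0 H1. unfold qform; simpl.
  rewrite !HM by lia. rewrite H0, H1. destruct z.
  unfold RtoC, Cconj, Cmul, Cadd, C0; simpl. apply Cpair_eq; ring.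
Qed.

Definition s3 := sqrt3.
Lemma s3sq : sqrt3 * sqrt3 = 3.
Proof. unfold sqrt3. apply sqrt_sqrt. lra. Qed.

Definition wv (m x : nat) : R :=
  match m, x with
  | O, O => 0 | O, _ => 1
  | 1%nat, O => sqrt3 / 2 | 1%nat, _ => - (1/2)
  | _, O => sqrt3 / 2 | _, _ => 1/2
  end.
Definition rv (i x : nat) : R :=
  match i, x with
  | O, O => 1 | O, _ => 0
  | 1%nat, O => 1/2 | 1%nat, _ => sqrt3 / 2
  | _, O => - (1/2) | _, _ => sqrt3 / 2
  end.

Definition Fm (m : nat) : Mat := fun x y => RtoC (2/3 * (wv m x * wv m y)).
Definition Uv (m x : nat) : R := sqrt (2/3) * wv m x.

Lemma Fm_rank1 m x y : Fm m x y = RtoC (Uv m x * Uv m y).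
Proof.
  unfold Fm, Uv. f_equal.
  replace (sqrt (2/3) * wv m x * (sqrt (2/3) * wv m y))
    with (sqrt (2/3) * sqrt (2/3) * (wv m x * wv m y)) by ring.
  rewrite sqrt_sqrt by lra. ring.
Qed.

Lemma psd_Fm m : psd 2 (Fm m).
Proof.
  intros v. apply (qform_rank1 2 (Uv m)). intros; apply Fm_rank1.
Qed.

Lemma Fm_sum x y : (x < 2)%nat -> (y < 2)%nat ->
  Cadd (Fm 0 x y) (Cadd (Fm 1 x y) (Cadd (Fm 2 x y) C0)) = Mid x y.
Proof.
  intros Hx Hy. pose proof s3sq.
  unfold Fm, Mid, RtoC, Cadd, C0, C1.
  destruct x as [|[|x]]; [| |lia]; destruct y as [|[|y]]; try lia; simpl;
  apply Cpair_eq; lra.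
Qed.

Definition zN (N : nat) : C := Copp (Cexpi (2 * PI / INR N)).

Definition zi (N i : nat) : C :=
  match i with O => C1 | 1%nat => zN N | _ => Cmul (zN N) (zN N) end.

Lemma zN_norm N : fst (zN N) ^ 2 + snd (zN N) ^ 2 = 1.
Proof.
  unfold zN, Copp, Cexpi; simpl. pose proof (sin2_cos2 (2 * PI / INR N)).
  unfold Rsqr in H. nra.
Qed.

Lemma norm_mul z w : fst (Cmul z w) ^ 2 + snd (Cmul z w) ^ 2
  = (fst z ^ 2 + snd z ^ 2) * (fst w ^ 2 + snd w ^ 2).
Proof. destruct z, w; unfold Cmul; simpl; ring. Qed.

Lemma zi_norm N i : (i < 3)%nat -> fst (zi N i) ^ 2 + snd (zi N i) ^ 2 = 1.
Proof.
  intros Hi.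
  destruct i as [|[|[|i]]]; try lia; unfold zi.
  - unfold C1; simpl; ring.
  - apply zN_norm.
  - rewrite norm_mul, zN_norm. ring.
Qed.

Lemma s3sq2 : sqrt3 ^ 2 = 3.
Proof. rewrite <- s3sq. ring. Qed.

Lemma psi_entry N i x : (i < 3)%nat -> (x < 2)%nat ->
  Upow_ket0 N i x = Cmul (zi N i) (RtoC (rv i x)).
Proof.
  intros Hi Hx. pose proof s3sq2 as H3.
  unfold zi. destruct i as [|[|[|i]]]; try lia; cbn [Upow_ket0];
  change (Umat N) with (Mscale (zN N) Urot);
  generalize (zN N); intros [p q];
  destruct x as [|[|x]]; try lia;
  simpl; unfold ket0, Mapply, Mscale, Urot, rv; simpl;
  unfold Cmul, Cadd, C0, C1, RtoC, Copp in *; simpl in *; apply Cpair_eq.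
  all: try ring.
  all: assert (Hp : p^2*(sqrt3*sqrt3) = p^2*3) by (rewrite s3sq; auto);
       assert (Hq : q^2*(sqrt3*sqrt3) = q^2*3) by (rewrite s3sq; auto);
       assert (Hpq : p*q*(sqrt3*sqrt3) = p*q*3) by (rewrite s3sq; auto); lra.
Qed.

Definition pv (i m : nat) : R := if Nat.eqb m i then 0 else 1/2.

Lemma cF N i m : (i < 3)%nat -> (m < 3)%nat ->
  qform 2 (Fm m) (Upow_ket0 N i) = RtoC (pv i m).
Proof.
  intros Hi Hm.
  rewrite (qf2 _ (fun x y => 2/3 * (wv m x * wv m y)) _ (zi N i) (rv i)).
  - rewrite zi_norm by auto. f_equal. pose proof s3sq.
    destruct i as [|[|[|i]]]; try lia; destruct m as [|[|[|m]]]; try lia;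
    unfold pv, wv, rv; simpl; lra.
  - intros; reflexivity.
  - apply psi_entry; auto.
  - apply psi_entry; auto.
Qed.

Lemma cMid N i : (i < 3)%nat -> qform 2 Mid (Upow_ket0 N i) = C1.
Proof.
  intros Hi.
  rewrite (qf2 _ (fun x y => if Nat.eqb x y then 1 else 0) _ (zi N i) (rv i)).
  - rewrite zi_norm by auto. unfold C1, RtoC. f_equal. pose proof s3sq.
    destruct i as [|[|[|i]]]; try lia; unfold rv; simpl; lra.
  - intros x y _ _. unfold Mid, RtoC, C1, C0. destruct (Nat.eqb x y); auto.
  - apply psi_entry; auto.
  - apply psi_entry; auto.
Qed.


Definition obs := (bool * bool * bool)%type.
Definition addo (s : obs) (m : nat) : obs :=
  let '(b0, b1, b2) := s in
  match m with O => (true, b1, b2) | 1%nat => (b0, true, b2) | _ => (b0, b1, true) end.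
Definition guess (s : obs) : nat :=
  let '(b0, b1, b2) := s in if negb b0 then 0%nat else if negb b1 then 1%nat else 2%nat.

Lemma guess_lt (s : obs) : (guess s < 3)%nat.
Proof. destruct s as [[[] []] []]; simpl; lia. Qed.

Fixpoint protP (N n : nat) (E : nat -> Mat) (s : obs) : nat -> Mat :=
  match n with
  | O => fun i' => if Nat.eqb i' (guess s) then kron N E else Mzero
  | S n' => Psum (map (fun m => (Fm m, protP N n' (upd E (N - S n') (Fm m)) (addo s m)))
                      (0 :: 1 :: 2 :: nil)%nat)
  end.

Lemma bit_lt2 k a : (bit k a < 2)%nat.
Proof. unfold bit; destruct (Nat.testbit a k); lia. Qed.

Lemma prot_locc N n : (n <= N)%nat -> forall E s,
  (forall k, (N - n <= k)%nat -> E k = Mid) -> locc_tree N E (protP N n E s).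
Proof.
  induction n; intros Hn E s HE.
  - simpl. apply locc_leaf. apply guess_lt.
  - simpl. apply (locc_split N E (N - S n)); [lia| |].
    + intros F Q Hin. simpl in Hin.
      destruct Hin as [Heq|[Heq|[Heq|[]]]]; inversion Heq; subst; (split; [apply psd_Fm|]);
      apply IHn; try lia; intros k Hk; unfold upd;
      destruct (Nat.eqb_spec k (N - S n)); try lia; apply HE; lia.
    + intros x y Hx Hy. simpl. rewrite HE by lia. apply Fm_sum; auto.
Qed.

Lemma kron_upd N E j X a b : (j < N)%nat ->
  kron N (upd E j X) a b = Cmul (X (bit j a) (bit j b))
     (Cprod (fun k => if Nat.eqb k j then C1 else E k (bit k a) (bit k b)) N).
Proof.
  intros Hj. unfold kron. rewrite <- Cprod_upd by auto. apply Cprod_ext; intros k _.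
  unfold upd. destruct (Nat.eqb_spec k j); subst; auto.
Qed.

Lemma kron_E N E j a b : (j < N)%nat ->
  kron N E a b = Cmul (E j (bit j a) (bit j b))
     (Cprod (fun k => if Nat.eqb k j then C1 else E k (bit k a) (bit k b)) N).
Proof.
  intros Hj. unfold kron. rewrite <- Cprod_upd by auto. apply Cprod_ext; intros k _.
  destruct (Nat.eqb_spec k j); subst; auto.
Qed.

Lemma prot_sum N n : (n <= N)%nat -> forall E s,
  (forall k, (N - n <= k)%nat -> E k = Mid) ->
  Meq (2 ^ N) (Madd (protP N n E s 0%nat) (Madd (protP N n E s 1%nat) (protP N n E s 2%nat)))
      (kron N E).
Proof.
  induction n; intros Hn E s HE.
  - intros a b _ _. simpl. unfold Madd, Mzero.
    pose proof (guess_lt s). destruct (guess s) as [|[|[|g]]]; try lia; simpl; ring.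
  - intros a b Ha Hb. simpl. unfold Madd, Mzero. set (j := (N - S n)%nat).
    assert (Hj : (j < N)%nat) by (unfold j; lia).
    assert (HE' : forall m, forall k, (N - n <= k)%nat -> upd E j (Fm m) k = Mid).
    { intros m k Hk. unfold upd. destruct (Nat.eqb_spec k j); [unfold j in *; lia|]. apply HE; lia. }
    pose proof (IHn ltac:(lia) (upd E j (Fm 0)) (addo s 0) (HE' 0%nat) a b Ha Hb) as H0.
    pose proof (IHn ltac:(lia) (upd E j (Fm 1)) (addo s 1) (HE' 1%nat) a b Ha Hb) as H1.
    pose proof (IHn ltac:(lia) (upd E j (Fm 2)) (addo s 2) (HE' 2%nat) a b Ha Hb) as H2.
    unfold Madd in H0, H1, H2.
    rewrite (kron_upd _ _ _ _ _ _ Hj) in H0; rewrite (kron_upd _ _ _ _ _ _ Hj) in H1;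
    rewrite (kron_upd _ _ _ _ _ _ Hj) in H2.
    rewrite (kron_E _ _ j _ _ Hj), HE by (unfold j; lia).
    rewrite <- (Fm_sum (bit j a) (bit j b)) by apply bit_lt2.
    match goal with |- ?L = _ => transitivity (Cadd (Cadd
      (protP N n (upd E j (Fm 0)) (addo s 0) 0%nat a b)
      (Cadd (protP N n (upd E j (Fm 0)) (addo s 0) 1%nat a b)
            (protP N n (upd E j (Fm 0)) (addo s 0) 2%nat a b)))
     (Cadd (Cadd (protP N n (upd E j (Fm 1)) (addo s 1) 0%nat a b)
      (Cadd (protP N n (upd E j (Fm 1)) (addo s 1) 1%nat a b)
            (protP N n (upd E j (Fm 1)) (addo s 1) 2%nat a b)))
      (Cadd (protP N n (upd E j (Fm 2)) (addo s 2) 0%nat a b)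
      (Cadd (protP N n (upd E j (Fm 2)) (addo s 2) 1%nat a b)
            (protP N n (upd E j (Fm 2)) (addo s 2) 2%nat a b))))) end.
    + ring.
    + rewrite H0, H1, H2. ring.
Qed.

Lemma prot_psd N n : (n <= N)%nat -> forall E s,
  (exists U : nat -> nat -> R, forall k, (k < N - n)%nat -> forall a b, E k a b = RtoC (U k a * U k b)) ->
  forall i, psd (2 ^ N) (protP N n E s i).
Proof.
  induction n; intros Hn E s [U HU] i.
  - simpl. destruct (Nat.eqb i (guess s)).
    + apply (psd_kron_rank1 N E U). intros k Hk; apply HU; lia.
    + apply psd_Mzero.
  - simpl. unfold Psum; simpl.
    assert (Hc : forall m, psd (2 ^ N) (protP N n (upd E (N - S n) (Fm m)) (addo s m) i)).
    { intros m. apply IHn; [lia|].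
      exists (fun k => if Nat.eqb k (N - S n) then Uv m else U k).
      intros k Hk a b. unfold upd. destruct (Nat.eqb_spec k (N - S n)).
      - apply Fm_rank1.
      - apply HU. lia. }
    repeat apply psd_Madd; auto. apply psd_Mzero.
Qed.


Fixpoint W (i n : nat) (s : obs) : R :=
  match n with
  | O => if Nat.eqb i (guess s) then 1 else 0
  | S n' => pv i 0 * W i n' (addo s 0) + pv i 1 * W i n' (addo s 1) + pv i 2 * W i n' (addo s 2)
  end.

Lemma RtoC_add x y : RtoC (x + y) = Cadd (RtoC x) (RtoC y).
Proof. unfold RtoC, Cadd; simpl; apply Cpair_eq; ring. Qed.
Lemma RtoC_mul x y : RtoC (x * y) = Cmul (RtoC x) (RtoC y).
Proof. unfold RtoC, Cmul; simpl; apply Cpair_eq; ring. Qed.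

Lemma prot_val N i n : (i < 3)%nat -> (n <= N)%nat -> forall E s,
  (forall k, (N - n <= k)%nat -> E k = Mid) ->
  qform (2 ^ N) (protP N n E s i) (vpow N (Upow_ket0 N i))
  = Cmul (Cprod (fun k => qform 2 (E k) (Upow_ket0 N i)) N) (RtoC (W i n s)).
Proof.
  intros Hi. induction n; intros Hn E s HE.
  - simpl. destruct (Nat.eqb i (guess s)).
    + rewrite qform_kron. unfold RtoC, Cmul; destruct (Cprod _ _); simpl; apply Cpair_eq; ring.
    + rewrite qform_Mzero. unfold RtoC, Cmul, C0; destruct (Cprod _ _); simpl; apply Cpair_eq; ring.
  - simpl. unfold Psum; simpl. set (j := (N - S n)%nat).
    assert (Hj : (j < N)%nat) by (unfold j; lia).
    assert (HE' : forall m, forall k, (N - n <= k)%nat -> upd E j (Fm m) k = Mid).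
    { intros m k Hk. unfold upd. destruct (Nat.eqb_spec k j); [unfold j in *; lia|]. apply HE; lia. }
    rewrite !qform_Madd, qform_Mzero.
    rewrite !IHn by (auto; lia).
    rewrite !upd_prod by auto. rewrite (E_prod N E j) by auto.
    rewrite HE by (unfold j; lia). rewrite cMid by auto.
    rewrite !cF by (auto; lia).
    rewrite !RtoC_add, !RtoC_mul. ring.
Qed.

Lemma W0 n b1 b2 : W 0 n (false, b1, b2) = 1.
Proof.
  revert b1 b2; induction n; intros; simpl; auto.
  rewrite !IHn. unfold pv; simpl. lra.
Qed.
Lemma W1a n b2 : W 1 n (true, false, b2) = 1.
Proof.
  revert b2; induction n; intros; simpl; auto.
  rewrite !IHn. unfold pv; simpl. lra.
Qed.
Lemma W1b n b2 : W 1 n (false, false, b2) >= 1 - (1/2)^n.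
Proof.
  revert b2; induction n; intros; simpl. lra.
  rewrite W1a. unfold pv; simpl. specialize (IHn true). lra.
Qed.
Lemma W2a n : W 2 n (true, true, false) = 1.
Proof.
  induction n; simpl; auto. rewrite !IHn. unfold pv; simpl. lra.
Qed.
Lemma W2b n : W 2 n (true, false, false) >= 1 - (1/2)^n.
Proof.
  induction n; simpl. lra. rewrite W2a. unfold pv; simpl. lra.
Qed.
Lemma W2c n : W 2 n (false, true, false) >= 1 - (1/2)^n.
Proof.
  induction n; simpl. lra. rewrite W2a. unfold pv; simpl. lra.
Qed.
Lemma W2d n : W 2 n (false, false, false) >= 1 - 2 * (1/2)^n.
Proof.
  destruct n; simpl. lra. pose proof (W2b n); pose proof (W2c n). unfold pv; simpl. lra.
Qed.

Definition P0 N := protP N N (fun _ => Mid) (false, false, false).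

Lemma P0_locc N : locc3 N (P0 N).
Proof. apply prot_locc; auto. Qed.

Lemma P0_povm N : povm3 N (P0 N).
Proof.
  split.
  - intros i _. apply prot_psd; auto. exists (fun _ _ => 0). intros; lia.
  - intros a b Ha Hb. unfold P0.
    rewrite (prot_sum N N (le_n N) (fun _ => Mid) (false,false,false)) by auto.
    apply kron_Mid; auto.
Qed.

Lemma P0_success N : success N (P0 N) >= 1 - (1/2)^N.
Proof.
  unfold success, psi, P0.
  assert (H : forall i, (i < 3)%nat -> Re (qform (2 ^ N) (protP N N (fun _ => Mid) (false,false,false) i)
      (vpow N (Upow_ket0 N i))) = W i N (false,false,false)).
  { intros i Hi. rewrite prot_val by auto. rewrite Cprod_one.
    - unfold RtoC, Cmul, C1, Re; simpl; ring.
    - intros; apply cMid; auto. }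
  rewrite !H by lia. rewrite W0. pose proof (W1b N false). pose proof (W2d N). lra.
Qed.


Lemma three_bound z0 z1 z2 : cnn z0 -> cnn z1 -> cnn z2 -> Cadd z0 (Cadd z1 z2) = C1 ->
  Re z0 <= 1 /\ Re z1 <= 1 /\ Re z2 <= 1.
Proof.
  destruct z0, z1, z2; unfold cnn, Cadd, C1, Re, Im; simpl; intros [_ H0] [_ H1] [_ H2] H.
  inversion H. lra.
Qed.

Lemma psi_norm N i : (i < 3)%nat -> qform (2 ^ N) Mid (psi N i) = C1.
Proof.
  intros Hi. unfold psi. rewrite <- (qform_Meq _ _ _ _ (kron_Mid N)).
  rewrite qform_kron. apply Cprod_one. intros; apply cMid; auto.
Qed.

Lemma opt_le1 N P : povm3 N P -> success N P <= 1.
Proof.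
  intros [Hpsd Hsum].
  assert (B : forall i, (i < 3)%nat -> Re (qform (2 ^ N) (P i) (psi N i)) <= 1).
  { intros i Hi.
    assert (Hs : Cadd (qform (2 ^ N) (P 0%nat) (psi N i))
       (Cadd (qform (2 ^ N) (P 1%nat) (psi N i)) (qform (2 ^ N) (P 2%nat) (psi N i))) = C1).
    { rewrite <- !qform_Madd. rewrite (qform_Meq _ _ _ _ Hsum). apply psi_norm; auto. }
    destruct (three_bound _ _ _ (Hpsd 0%nat ltac:(lia) _) (Hpsd 1%nat ltac:(lia) _)
                (Hpsd 2%nat ltac:(lia) _) Hs) as [B0 [B1 B2]].
    destruct i as [|[|[|i]]]; auto; lia. }
  unfold success. pose proof (B 0%nat ltac:(lia)). pose proof (B 1%nat ltac:(lia)).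
  pose proof (B 2%nat ltac:(lia)). lra.
Qed.

Lemma locc_le1 N P : locc3 N P -> success N P <= 1.
Proof.
  intros HT.
  assert (B : forall i, (i < 3)%nat -> Re (qform (2 ^ N) (P i) (psi N i)) <= 1).
  { intros i Hi.
    destruct (locc_inv N (fun _ => Mid) P (Upow_ket0 N i) HT) as [Hnn Hs].
    { intros k. rewrite cMid by auto. unfold cnn, C1, Re, Im; simpl; lra. }
    rewrite Cprod_one in Hs by (intros; apply cMid; auto).
    destruct (three_bound _ _ _ (Hnn 0%nat) (Hnn 1%nat) (Hnn 2%nat) Hs) as [B0 [B1 B2]].
    unfold psi. destruct i as [|[|[|i]]]; auto; lia. }
  unfold success. pose proof (B 0%nat ltac:(lia)). pose proof (B 1%nat ltac:(lia)).
  pose proof (B 2%nat ltac:(lia)). lra.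
Qed.

Lemma half_pow_cv : forall eps, eps > 0 -> exists M, forall n, (n >= M)%nat -> (1/2)^n < eps.
Proof.
  intros eps He. destruct (pow_lt_1_zero (1/2) ltac:(rewrite Rabs_pos_eq; lra) eps He) as [M HM].
  exists M. intros n Hn. specialize (HM n Hn). rewrite Rabs_pos_eq in HM; auto.
  apply pow_le; lra.
Qed.


Theorem mainTheorem14 (Popt Plocc : nat -> R) :
  (forall N : nat, (1 <= N)%nat -> is_lub (opt_values N) (Popt N)) ->
  (forall N : nat, (1 <= N)%nat -> is_lub (locc_values N) (Plocc N)) ->
  Un_cv Plocc 1 /\ Un_cv Popt 1 /\ Un_cv (fun N => Popt N - Plocc N) 0.
Proof.
  intros Hopt Hlocc.
  assert (Bo : forall N, (1 <= N)%nat -> 1 - (1/2)^N <= Popt N <= 1).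
  { intros N HN. destruct (Hopt N HN) as [Hub Hl]. split.
    - pose proof (P0_success N). apply Rle_trans with (success N (P0 N)); [lra|].
      apply Hub. exists (P0 N); split; auto. apply P0_povm.
    - apply Hl. intros x [P [HP ->]]. apply opt_le1; auto. }
  assert (Bl : forall N, (1 <= N)%nat -> 1 - (1/2)^N <= Plocc N <= 1).
  { intros N HN. destruct (Hlocc N HN) as [Hub Hl]. split.
    - pose proof (P0_success N). apply Rle_trans with (success N (P0 N)); [lra|].
      apply Hub. exists (P0 N); split; auto. apply P0_locc.
    - apply Hl. intros x [P [HP ->]]. apply locc_le1; auto. }
  split; [|split]; intros eps He; destruct (half_pow_cv eps He) as [M HM];
    exists (max M 1); intros n Hn; unfold R_dist;
    specialize (HM n ltac:(lia)); specialize (Bo n ltac:(lia)); specialize (Bl n ltac:(lia));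
    apply Rabs_def1; lra.
Qed.
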